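(* Let $G$ be a countable group with a subgroup $\Gamma$ of index $m$ and a subgroup $H\lhd\Gamma$ of cardinality $d$ such that $\Gamma/H$ is abelian. Then for every finitely additive left-invariant mean $\mu$ on $G$ we have $\textup{dc}_\mu(G)\ge\frac{1}{m^2d}$. Moreover, if $G$ is finitely generated and $M$ is a sequence of probability measures on $G$ that measures index uniformly then $\textup{dc}_M(G)\ge\frac{1}{m^2d}$.
   Context: A finitely additive left-invariant mean is a positive normalised linear functional $\int\cdot\,d\mu$ on $\ell^\infty(G)$ invariant under $f\mapsto f(g^{-1}\cdot)$; $\mu(X)=\int1_X\,d\mu$; product mean $\int f\,d(\mu\times\mu)=\int_x\int_y f(x,y)\,d\mu(x)\,d\mu(y)$; $\textup{dc}_\mu(G)=(\mu\times\mu)(\{(x,y):xy=yx\})$. A sequence $M=(\mu_n)$ of probability measures measures index uniformly if $\mu_n(xH)\to1/[G:H]$ uniformly over $x\in G$ and subgroups $H$ (with $1/[G:H]=0$ for infinite index), and $\textup{dc}_M(G)=\limsup_n\textup{dc}_{\mu_n}(G)$ where $\textup{dc}_{\mu_n}(G)=(\mu_n\times\mu_n)(\{(x,y):xy=yx\})$. *)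

(* Defs.v *)
From Stdlib Require Import Reals List ClassicalDescription ClassicalEpsilon.
From Coquelicot Require Import Coquelicot.
Import ListNotations.
Open Scope R_scope.

Record group := Group {
  carrier :> Type;
  gmul : carrier -> carrier -> carrier;
  gone : carrier;
  ginv : carrier -> carrier;
  gmulA : forall x y z, gmul x (gmul y z) = gmul (gmul x y) z;
  gmul1l : forall x, gmul gone x = x;
  gmulVl : forall x, gmul (ginv x) x = gone
}.

Section Defs.
Variable G : group.

Definition countable_group : Prop :=
  exists f : G -> nat, forall x y, f x = f y -> x = y.

Definition is_subgroup (H : G -> Prop) : Prop :=
  H (gone G) /\ (forall x y, H x -> H y -> H (gmul G x y)) /\
  (forall x, H x -> H (ginv G x)).

Definition normal_in (H Gam : G -> Prop) : Prop :=
  is_subgroup H /\ is_subgroup Gam /\ (forall h, H h -> Gam h) /\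
  (forall g h, Gam g -> H h -> H (gmul G (gmul G (ginv G g) h) g)).

(* Gam / H is abelian: xyH = yxH for all x y in Gam *)
Definition quotient_abelian (Gam H : G -> Prop) : Prop :=
  forall x y, Gam x -> Gam y ->
    H (gmul G (ginv G (gmul G x y)) (gmul G y x)).

Definition has_card (H : G -> Prop) (d : nat) : Prop :=
  exists l : list G, NoDup l /\ length l = d /\ (forall x, H x <-> In x l).

Definition lcoset (x : G) (H : G -> Prop) : G -> Prop :=
  fun y => exists h, H h /\ y = gmul G x h.

Definition is_index (H : G -> Prop) (k : nat) : Prop :=
  exists l : list G, length l = k /\
    (forall i j, (i < k)%nat -> (j < k)%nat -> i <> j ->
       ~ H (gmul G (ginv G (nth i l (gone G))) (nth j l (gone G)))) /\
    (forall g, exists x, In x l /\ lcoset x H g).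

(* 1/[G:H], with the convention 1/[G:H] = 0 when the index is infinite *)
Definition inv_index (H : G -> Prop) : R :=
  match excluded_middle_informative (exists k, is_index H k) with
  | left e => / INR (proj1_sig (constructive_indefinite_description _ e))
  | right _ => 0
  end.

Definition finitely_generated : Prop :=
  exists S : list G, forall K, is_subgroup K -> (forall s, In s S -> K s) ->
    forall g, K g.

End Defs.

Definition ind {T : Type} (X : T -> Prop) (x : T) : R :=
  if excluded_middle_informative (X x) then 1 else 0.

Definition bounded {T : Type} (f : T -> R) : Prop :=
  exists B, forall x, Rabs (f x) <= B.

(* It is given as a
   map on all real functions; only its values on bounded functions matter. *)
Definition is_left_invariant_mean (G : group) (mu : (G -> R) -> R) : Prop :=
  (forall f g, bounded f -> bounded g -> mu (fun x => f x + g x) = mu f + mu g) /\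
  (forall (c : R) f, bounded f -> mu (fun x => c * f x) = c * mu f) /\
  (forall f, bounded f -> (forall x, 0 <= f x) -> 0 <= mu f) /\
  mu (fun _ => 1) = 1 /\
  (forall (g : G) f, bounded f -> mu (fun x => f (gmul G (ginv G g) x)) = mu f).

Definition commuting (G : group) (x y : G) : Prop := gmul G x y = gmul G y x.

Definition dc_mean (G : group) (mu : (G -> R) -> R) : R :=
  mu (fun x => mu (fun y => ind (commuting G x) y)).

Definition fsums {T : Type} (p : T -> R) (A : T -> Prop) : R -> Prop :=
  fun r => exists l : list T, NoDup l /\ (forall x, In x l -> A x) /\
    r = fold_right (fun x s => p x + s) 0 l.

(* measure of A under the (discrete) measure with point masses p *)
Definition mass {T : Type} (p : T -> R) (A : T -> Prop) : R :=
  real (Lub_Rbar (fsums p A)).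

Definition is_prob_measure {T : Type} (p : T -> R) : Prop :=
  (forall x, 0 <= p x) /\ is_lub (fsums p (fun _ => True)) 1.

Definition dc_prob (G : group) (p : G -> R) : R :=
  mass (fun z : G * G => p (fst z) * p (snd z))
       (fun z => commuting G (fst z) (snd z)).

Definition measures_index_uniformly (G : group) (M : nat -> G -> R) : Prop :=
  forall eps, 0 < eps -> exists N, forall n, (N <= n)%nat ->
    forall (x : G) (H : G -> Prop), is_subgroup G H ->
      Rabs (mass (M n) (lcoset G x H) - inv_index G H) < eps.

Definition dc_seq (G : group) (M : nat -> G -> R) : Rbar :=
  LimSup_seq (fun n => dc_prob G (M n)).

(* Main.v *)
Require Import Defs.
From Stdlib Require Import Reals List Lra Lia FunctionalExtensionality PropExtensionality ClassicalEpsilon.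
From Coquelicot Require Import Coquelicot.
Open Scope R_scope.
Notation ind := Defs.ind.
Notation bounded := Defs.bounded.

Lemma gmulVr (G : group) (x : G) : gmul G x (ginv G x) = gone G.
Proof.
  rewrite <- (gmul1l G (gmul G x (ginv G x))).
  rewrite <- (gmulVl G (ginv G x)) at 1.
  rewrite <- gmulA. rewrite (gmulA G (ginv G x) x (ginv G x)), gmulVl, gmul1l.
  apply gmulVl.
Qed.

Lemma gmul1r (G : group) (x : G) : gmul G x (gone G) = x.
Proof. rewrite <- (gmulVl G x), gmulA, gmulVr. apply gmul1l. Qed.

Lemma gcancel (G : group) (a b c : G) : gmul G a b = gmul G a c -> b = c.
Proof.
  intro E. rewrite <- (gmul1l G b), <- (gmul1l G c), <- (gmulVl G a), <- !gmulA, E. reflexivity.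
Qed.

Lemma ginvK (G : group) (x : G) : ginv G (ginv G x) = x.
Proof.
  apply (gcancel G (ginv G x)). rewrite gmulVr, gmulVl. reflexivity.
Qed.

Lemma gVK (G : group) (a b : G) : gmul G a (gmul G (ginv G a) b) = b.
Proof. rewrite gmulA, gmulVr, gmul1l. reflexivity. Qed.

Lemma ginvM (G : group) (a b : G) : ginv G (gmul G a b) = gmul G (ginv G b) (ginv G a).
Proof.
  apply (gcancel G (gmul G a b)). rewrite gmulVr.
  rewrite <- gmulA, (gmulA G b), gmulVr, gmul1l, gmulVr. reflexivity.
Qed.

Lemma centralizer_subgroup (G : group) (x : G) : is_subgroup G (commuting G x).
Proof.
  unfold commuting; repeat split.
  - rewrite gmul1l, gmul1r; reflexivity.
  - intros a b Ha Hb. rewrite gmulA, Ha, <- gmulA, Hb, gmulA. reflexivity.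
  - intros a Ha. apply (gcancel G a). rewrite gVK, gmulA, <- Ha, <- gmulA, gmulVr, gmul1r. reflexivity.
Qed.

Definition Aset (G : group) (x h : G) : G -> Prop :=
  fun y => gmul G y x = gmul G (gmul G x h) y.

Lemma Aset_coset (G : group) (x h y0 : G) : Aset G x h y0 ->
  forall y, Aset G x h y <-> lcoset G y0 (commuting G x) y.
Proof.
  unfold Aset, lcoset, commuting; intros H0 y; split.
  - intros Hy. exists (gmul G (ginv G y0) y). split.
    + symmetry. apply (gcancel G y0).
      rewrite (gmulA G y0 (gmul G (ginv G y0) y) x), gVK, Hy.
      rewrite (gmulA G y0 x), H0, <- (gmulA G (gmul G x h) y0), gVK. reflexivity.
    + rewrite gVK. reflexivity.
  - intros [z [Hz ->]]. rewrite <- gmulA, <- Hz, gmulA, H0, <- gmulA. reflexivity.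
Qed.

Lemma Aset_cover (G : group) (Gam H : G -> Prop) (x y : G) :
  normal_in G H Gam -> quotient_abelian G Gam H -> Gam x -> Gam y ->
  exists h, H h /\ Aset G x h y.
Proof.
  intros [_ [[_ [_ GV]] [_ Hn]]] Hab Hx Hy.
  pose (k := gmul G (ginv G (gmul G x y)) (gmul G y x)).
  exists (gmul G (gmul G (ginv G (ginv G y)) k) (ginv G y)). split.
  - apply Hn; [apply GV; exact Hy|]. apply Hab; assumption.
  - unfold Aset, k. rewrite ginvK.
    rewrite <- !gmulA. rewrite gmulVl, gmul1r.
    rewrite !gmulA. rewrite gmulVr, gmul1l. reflexivity.
Qed.

Lemma ind_bounds {T} (X : T -> Prop) y : 0 <= ind X y <= 1.
Proof. unfold Defs.ind; destruct (excluded_middle_informative (X y)); simpl; lra. Qed.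
Lemma ind_true {T} (X : T -> Prop) y : X y -> ind X y = 1.
Proof. unfold Defs.ind; destruct (excluded_middle_informative (X y)); simpl; tauto. Qed.
Lemma ind_false {T} (X : T -> Prop) y : ~ X y -> ind X y = 0.
Proof. unfold Defs.ind; destruct (excluded_middle_informative (X y)); simpl; tauto. Qed.
Lemma ind_bounded {T} (X : T -> Prop) : bounded (ind X).
Proof. exists 1. intro y. pose proof (ind_bounds X y). rewrite Rabs_right; lra. Qed.

Definition sumf {A T : Type} (l : list A) (F : A -> T -> R) : T -> R :=
  fun y => fold_right (fun a s => F a y + s) 0 l.

Lemma sumf_bounded {A T : Type} (l : list A) (F : A -> T -> R) :
  (forall a, bounded (F a)) -> bounded (sumf l F).
Proof.
  intro HF. induction l as [|a l IH].
  - exists 0. intro; unfold sumf; simpl. rewrite Rabs_R0; lra.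
  - destruct IH as [B HB]. destruct (HF a) as [B' HB']. exists (B' + B). intro y.
    unfold sumf; simpl. fold (sumf l F y).
    eapply Rle_trans; [apply Rabs_triang|]. specialize (HB y). specialize (HB' y). lra.
Qed.

Lemma bounded_const {T} (c : R) : bounded (fun _ : T => c).
Proof. exists (Rabs c). intro; lra. Qed.

Lemma bounded_scal {T} (c : R) (f : T -> R) : bounded f -> bounded (fun x => c * f x).
Proof. intros [B HB]. exists (Rabs c * B). intro x. rewrite Rabs_mult.
  apply Rmult_le_compat_l; [apply Rabs_pos|apply HB]. Qed.

Lemma mean_zero (G : group) mu : is_left_invariant_mean G mu -> mu (fun _ => 0) = 0.
Proof.
  intros (Ha & Hs & Hp & H1 & Hi).
  replace (fun _ : G => 0) with (fun x : G => 0 * (fun _ => 1) x) by (apply functional_extensionality; intro; simpl; ring).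
  rewrite Hs by apply bounded_const. ring.
Qed.

Lemma mean_mono (G : group) mu f g : is_left_invariant_mean G mu ->
  bounded f -> bounded g -> (forall x, f x <= g x) -> mu f <= mu g.
Proof.
  intros HM Hf Hg Hle. pose proof HM as (Ha & Hs & Hp & H1 & Hi).
  assert (Hb : bounded (fun x => -1 * f x)) by (apply bounded_scal; exact Hf).
  assert (Hbd : bounded (fun x => g x + -1 * f x)).
  { destruct Hg as [B HB]; destruct Hb as [B' HB']. exists (B + B'). intro x.
    eapply Rle_trans; [apply Rabs_triang|]. specialize (HB x); specialize (HB' x); lra. }
  assert (E : g = fun x => f x + (g x + -1 * f x)) by (apply functional_extensionality; intro; ring).
  rewrite E, Ha, Ha, Hs by assumption.
  assert (0 <= mu (fun x => g x + -1 * f x)) by (apply Hp; [exact Hbd| intro x; specialize (Hle x); lra]).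
  rewrite Ha, Hs in H by assumption. lra.
Qed.

Lemma mean_sumf (G : group) mu {A} (l : list A) (F : A -> G -> R) :
  is_left_invariant_mean G mu -> (forall a, bounded (F a)) ->
  mu (sumf l F) = fold_right (fun a s => mu (F a) + s) 0 l.
Proof.
  intros HM HF. pose proof HM as (Ha & Hs & Hp & H1 & Hi).
  induction l as [|a l IH]; simpl.
  - apply mean_zero; exact HM.
  - change (sumf (a :: l) F) with (fun y => F a y + sumf l F y).
    rewrite Ha; [rewrite IH; reflexivity | apply HF | apply sumf_bounded; exact HF].
Qed.

Lemma mean_coset (G : group) mu (x : G) (C : G -> Prop) :
  is_left_invariant_mean G mu -> mu (ind (lcoset G x C)) = mu (ind C).
Proof.
  intros HM. pose proof HM as (Ha & Hs & Hp & H1 & Hi).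
  rewrite <- (Hi x (ind C)) by apply ind_bounded. f_equal.
  apply functional_extensionality; intro y. unfold Defs.ind.
  destruct (excluded_middle_informative (C (gmul G (ginv G x) y))) as [Y|Y];
  destruct (excluded_middle_informative (lcoset G x C y)) as [[h [Hh ->]]|N]; try reflexivity.
  - exfalso; apply N. exists (gmul G (ginv G x) y). split; [exact Y|]. rewrite gVK; reflexivity.
  - exfalso; apply Y. rewrite gmulA, gmulVl, gmul1l. exact Hh.
Qed.

Lemma sumf_ind_nonneg {A T} (l : list A) (P : A -> T -> Prop) y :
  0 <= sumf l (fun a => ind (P a)) y.
Proof.
  induction l as [|a l IH]; unfold sumf; simpl; [lra|]. fold (sumf l (fun a => ind (P a)) y).
  pose proof (ind_bounds (P a) y). lra.
Qed.

Lemma sumf_ind_cover {A T} (l : list A) (P : A -> T -> Prop) y :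
  (exists a, In a l /\ P a y) -> 1 <= sumf l (fun a => ind (P a)) y.
Proof.
  intros [a0 [Hin HP]]. induction l as [|a l IH]; [destruct Hin|].
  unfold sumf; simpl; fold (sumf l (fun a => ind (P a)) y).
  destruct Hin as [<-|Hin].
  - rewrite ind_true by exact HP. pose proof (sumf_ind_nonneg l P y). lra.
  - pose proof (ind_bounds (P a) y). specialize (IH Hin). lra.
Qed.

Lemma fold_const {A} (l : list A) (c : R) :
  fold_right (fun _ s => c + s) 0 l = INR (length l) * c.
Proof. induction l as [|a l IH]; [simpl; ring|]. simpl length. rewrite S_INR. simpl fold_right. rewrite IH. ring. Qed.



Lemma fold_le {A} (l : list A) (f g : A -> R) :
  (forall a, In a l -> f a <= g a) ->
  fold_right (fun a s => f a + s) 0 l <= fold_right (fun a s => g a + s) 0 l.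
Proof.
  induction l as [|a l IH]; simpl; intros Hle; [lra|].
  assert (H1 := Hle a (or_introl eq_refl)).
  assert (H2 := IH (fun b Hb => Hle b (or_intror Hb))). lra.
Qed.

Lemma fold_eq {A} (l : list A) (f g : A -> R) :
  (forall a, In a l -> f a = g a) ->
  fold_right (fun a s => f a + s) 0 l = fold_right (fun a s => g a + s) 0 l.
Proof.
  induction l as [|a l IH]; simpl; intros Hle; [lra|].
  rewrite (Hle a (or_introl eq_refl)), (IH (fun b Hb => Hle b (or_intror Hb))). reflexivity.
Qed.

Lemma index_pos (G : group) (Gam : G -> Prop) m : is_index G Gam m -> (1 <= m)%nat.
Proof.
  intros [l [Hlen [_ Hcov]]]. destruct (Hcov (gone G)) as [x [Hx _]].
  destruct l; [destruct Hx|]. simpl in Hlen. lia.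
Qed.

Lemma card_pos (G : group) (H : G -> Prop) d : is_subgroup G H -> has_card G H d -> (1 <= d)%nat.
Proof.
  intros [H1 _] [l [_ [Hlen Hin]]]. apply Hin in H1. destruct l; [destruct H1|]. simpl in Hlen. lia.
Qed.

Lemma ind_ext {T} (P Q : T -> Prop) : (forall y, P y <-> Q y) -> ind P = ind Q.
Proof.
  intro E. apply functional_extensionality; intro y. unfold Defs.ind.
  destruct (excluded_middle_informative (P y)) as [p|p];
  destruct (excluded_middle_informative (Q y)) as [q|q]; try reflexivity;
  exfalso; firstorder.
Qed.

Lemma final_arith (mR dR g : R) : 1 <= mR -> 1 <= dR -> 1 <= mR * g ->
  g / dR * g >= 1 / (mR ^ 2 * dR).
Proof.
  intros Hm Hd Hg.
  assert (Hg' : / mR <= g).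
  { apply (Rmult_le_reg_l mR); [lra|]. rewrite Rinv_r by lra. lra. }
  assert (0 < / mR) by (apply Rinv_0_lt_compat; lra).
  assert (0 < / dR) by (apply Rinv_0_lt_compat; lra).
  replace (1 / (mR ^ 2 * dR)) with (/ mR * / mR * / dR) by (field; lra).
  unfold Rdiv. apply Rle_ge.
  replace (g * / dR * g) with (g * g * / dR) by ring.
  apply Rmult_le_compat_r; [lra|]. apply Rmult_le_compat; lra.
Qed.

Lemma mean_part (G : group) (Gam H : G -> Prop) (m d : nat) mu :
  is_subgroup G Gam -> is_index G Gam m ->
  normal_in G H Gam -> has_card G H d ->
  quotient_abelian G Gam H -> is_left_invariant_mean G mu ->
  dc_mean G mu >= 1 / (INR m ^ 2 * INR d).
Proof.
  intros HGam Hidx Hn Hcard Hab HM.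
  assert (Hm1 := index_pos G Gam m Hidx).
  assert (Hd1 : (1 <= d)%nat) by (apply (card_pos G H d); [apply Hn|exact Hcard]).
  pose proof HM as (Ha & Hs & Hp & H1 & Hi).
  set (muG := mu (ind Gam)).
  assert (S1 : 1 <= INR m * muG).
  { destruct Hidx as [l [Hlen [_ Hcov]]].
    assert (E : mu (sumf l (fun x => ind (lcoset G x Gam))) = INR m * muG).
    { rewrite mean_sumf by (exact HM || (intro; apply ind_bounded)).
      rewrite <- Hlen, <- fold_const. apply fold_eq. intros; apply mean_coset; exact HM. }
    rewrite <- E, <- H1. apply mean_mono; [exact HM|apply bounded_const| |].
    - apply sumf_bounded; intro; apply ind_bounded.
    - intro g. apply (sumf_ind_cover l (fun x => lcoset G x Gam)). apply Hcov. }
  assert (S2 : forall x, Gam x -> muG <= INR d * mu (ind (commuting G x))).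
  { intros x Hx. destruct Hcard as [lH [_ [Hlen Hin]]].
    assert (Hb : bounded (sumf lH (fun h => ind (Aset G x h))))
      by (apply sumf_bounded; intro; apply ind_bounded).
    apply Rle_trans with (mu (sumf lH (fun h => ind (Aset G x h)))).
    - apply mean_mono; [exact HM|apply ind_bounded|exact Hb|].
      intro y. destruct (classic (Gam y)) as [Hy|Hy].
      + rewrite ind_true by exact Hy. apply (sumf_ind_cover lH (fun h => Aset G x h)).
        destruct (Aset_cover G Gam H x y Hn Hab Hx Hy) as [h [Hh HA]].
        exists h; split; [apply Hin; exact Hh|exact HA].
      + rewrite ind_false by exact Hy. apply (sumf_ind_nonneg lH (fun h => Aset G x h)).
    - rewrite mean_sumf by (exact HM || (intro; apply ind_bounded)).
      rewrite <- Hlen, <- fold_const. apply fold_le. intros h _.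
      destruct (classic (exists y0, Aset G x h y0)) as [[y0 Hy0]|Hno].
      + rewrite (ind_ext _ _ (Aset_coset G x h y0 Hy0)). rewrite mean_coset by exact HM. lra.
      + replace (ind (Aset G x h)) with (fun _ : G => 0).
        * rewrite mean_zero by exact HM. apply Hp; [apply ind_bounded|]. intro; apply ind_bounds.
        * apply functional_extensionality; intro y. rewrite ind_false; [reflexivity|].
          intro Hy; apply Hno; exists y; exact Hy. }
  set (F := fun x => mu (ind (commuting G x))).
  assert (HF : forall x, 0 <= F x <= 1).
  { intro x; unfold F; split.
    - apply Hp; [apply ind_bounded|]. intro; apply ind_bounds.
    - rewrite <- H1. apply mean_mono; [exact HM|apply ind_bounded|apply bounded_const|].
      intro; apply ind_bounds. }
  assert (HFb : bounded F).
  { exists 1. intro x. specialize (HF x). rewrite Rabs_right; lra. }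
  assert (HdR : 1 <= INR d) by (apply (le_INR 1); exact Hd1).
  assert (HmR : 1 <= INR m) by (apply (le_INR 1); exact Hm1).
  assert (S3 : muG / INR d * muG <= dc_mean G mu).
  { unfold dc_mean. fold F. unfold muG at 2. rewrite <- Hs by apply ind_bounded.
    apply mean_mono; [exact HM|apply bounded_scal, ind_bounded|exact HFb|].
    intro x. destruct (classic (Gam x)) as [Hx|Hx].
    - rewrite ind_true by exact Hx. specialize (S2 x Hx). unfold F.
      apply (Rmult_le_reg_l (INR d)); [lra|].
      replace (INR d * (muG / INR d * 1)) with muG by (field; lra). exact S2.
    - rewrite ind_false by exact Hx. rewrite Rmult_0_r. apply HF. }
  pose proof (final_arith (INR m) (INR d) muG HmR HdR S1). lra.
Qed.

Definition lsum {A} (f : A -> R) (l : list A) : R := fold_right (fun a s => f a + s) 0 l.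

Definition dec {A} : forall x y : A, {x = y} + {x <> y} :=
  fun x y => excluded_middle_informative (x = y).

Lemma lsum_nonneg {A} (f : A -> R) l : (forall a, 0 <= f a) -> 0 <= lsum f l.
Proof. intro H; induction l; simpl; [lra|]. specialize (H a). unfold lsum in *. lra. Qed.

Lemma lsum_app {A} (f : A -> R) l1 l2 : lsum f (l1 ++ l2) = lsum f l1 + lsum f l2.
Proof. induction l1; unfold lsum in *; simpl; [ring|]. rewrite IHl1; ring. Qed.

Lemma lsum_remove_le {A} (f : A -> R) l a : (forall a, 0 <= f a) ->
  lsum f (remove dec a l) <= lsum f l.
Proof.
  intro H; induction l as [|b l IH]; simpl; [lra|].
  destruct (dec a b); simpl; unfold lsum in *; simpl; specialize (H b); lra.
Qed.

Lemma lsum_remove {A} (f : A -> R) l a : (forall a, 0 <= f a) -> In a l ->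
  f a + lsum f (remove dec a l) <= lsum f l.
Proof.
  intros H Hin; induction l as [|b l IH]; [destruct Hin|]. simpl.
  destruct (dec a b) as [<-|ne].
  - pose proof (lsum_remove_le f l a H). unfold lsum in *; simpl; lra.
  - destruct Hin as [->|Hin]; [exfalso; apply ne; reflexivity|].
    specialize (IH Hin). unfold lsum in *; simpl; lra.
Qed.

Lemma lsum_incl {A} (f : A -> R) (l l' : list A) : (forall a, 0 <= f a) ->
  NoDup l -> incl l l' -> lsum f l <= lsum f l'.
Proof.
  intros H Hnd; revert l'; induction Hnd as [|a l Ha Hnd IH]; intros l' Hi.
  - simpl. apply lsum_nonneg, H.
  - assert (Hal : In a l') by (apply Hi; left; reflexivity).
    eapply Rle_trans; [|apply (lsum_remove f l' a H Hal)].
    simpl. apply Rplus_le_compat_l. apply IH.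
    intros y Hy. apply in_in_remove; [intros ->; contradiction|]. apply Hi; right; exact Hy.
Qed.

Lemma lsum_le {A} (l : list A) (f g : A -> R) :
  (forall a, In a l -> f a <= g a) -> lsum f l <= lsum g l.
Proof. apply fold_le. Qed.

Lemma lsum_scal {A} (f : A -> R) c l : lsum (fun a => c * f a) l = c * lsum f l.
Proof. induction l; unfold lsum in *; simpl; [ring|]. rewrite IHl; ring. Qed.

Lemma lsum_plus {A} (f g : A -> R) l : lsum (fun a => f a + g a) l = lsum f l + lsum g l.
Proof. induction l; unfold lsum in *; simpl; [ring|]. rewrite IHl; ring. Qed.

Lemma lsum_swap {A B} (F : A -> B -> R) (l : list A) (L : list B) :
  lsum (fun a => lsum (F a) L) l = lsum (fun y => lsum (fun a => F a y) l) L.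
Proof.
  induction l as [|a l IH].
  - unfold lsum at 1; simpl. induction L; unfold lsum in *; simpl; [reflexivity|]. rewrite <- IHL; ring.
  - change (lsum (fun a0 => lsum (F a0) L) (a :: l)) with (lsum (F a) L + lsum (fun a0 => lsum (F a0) L) l).
    rewrite IH, <- lsum_plus. reflexivity.
Qed.

Lemma lsum_prod {A} (f : A -> R) (X Y : list A) :
  lsum (fun z => f (fst z) * f (snd z)) (list_prod X Y) = lsum f X * lsum f Y.
Proof.
  induction X as [|a X IH]; simpl; [unfold lsum; simpl; ring|].
  rewrite lsum_app, IH. unfold lsum at 3; simpl; fold (lsum f X).
  assert (E : lsum (fun z => f (fst z) * f (snd z)) (map (fun y => (a, y)) Y) = f a * lsum f Y).
  { clear IH. induction Y; unfold lsum in *; simpl; [ring|]. rewrite IHY; ring. }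
  rewrite E. fold (lsum f Y). ring.
Qed.

Definition bfilt {T} (P : T -> Prop) : T -> bool :=
  fun y => if excluded_middle_informative (P y) then true else false.

Lemma lsum_filter {T} (p : T -> R) (P : T -> Prop) L :
  lsum p (filter (bfilt P) L) = lsum (fun y => ind P y * p y) L.
Proof.
  induction L as [|y L IH]; [reflexivity|]. simpl. unfold bfilt at 1, Defs.ind at 1.
  destruct (excluded_middle_informative (P y)); simpl; unfold lsum in *; simpl; rewrite IH; ring.
Qed.

Definition fs_bounded {T} (q : T -> R) : Prop := forall A r, fsums q A r -> r <= 1.

Lemma mass_spec {T} (q : T -> R) A : fs_bounded q ->
  Lub_Rbar (fsums q A) = Finite (mass q A).
Proof.
  intro Hb. unfold mass. destruct (Lub_Rbar_correct (fsums q A)) as [Hub Hl].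
  assert (H0 : fsums q A 0) by (exists nil; repeat split; [constructor|intros x []]).
  assert (Hu : Rbar_le (Lub_Rbar (fsums q A)) 1).
  { apply Hl. intros r Hr. simpl. apply (Hb A r Hr). }
  specialize (Hub 0 H0).
  destruct (Lub_Rbar (fsums q A)); simpl in *; try contradiction; reflexivity.
Qed.

Lemma mass_ge {T} (q : T -> R) A r : fs_bounded q -> fsums q A r -> r <= mass q A.
Proof.
  intros Hb Hr. destruct (Lub_Rbar_correct (fsums q A)) as [Hub _].
  specialize (Hub r Hr). rewrite mass_spec in Hub by exact Hb. exact Hub.
Qed.

Lemma mass_le {T} (q : T -> R) A c : fs_bounded q ->
  (forall r, fsums q A r -> r <= c) -> mass q A <= c.
Proof.
  intros Hb Hc. destruct (Lub_Rbar_correct (fsums q A)) as [_ Hl].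
  assert (H := Hl (Finite c) Hc). rewrite mass_spec in H by exact Hb. exact H.
Qed.

Lemma mass_approx {T} (q : T -> R) A d : fs_bounded q -> 0 < d ->
  exists l, NoDup l /\ (forall x, In x l -> A x) /\ mass q A - d < lsum q l.
Proof.
  intros Hb Hd. apply NNPP. intro Hno.
  assert (mass q A <= mass q A - d); [|lra].
  apply mass_le; [exact Hb|]. intros r [l [Hnd [Hin ->]]].
  apply Rnot_lt_le. intro Hlt. apply Hno. exists l. repeat split; assumption.
Qed.

Lemma mass_nonneg {T} (q : T -> R) A : fs_bounded q -> 0 <= mass q A.
Proof. intro Hb. apply mass_ge; [exact Hb|]. exists nil; repeat split; [constructor|intros x []]. Qed.

Lemma mass_ext {T} (q : T -> R) (A B : T -> Prop) : (forall y, A y <-> B y) -> mass q A = mass q B.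
Proof.
  intro E. replace B with A; [reflexivity|].
  apply functional_extensionality; intro y. apply PropExtensionality.propositional_extensionality, E.
Qed.

Lemma prob_bounded {T} (p : T -> R) : is_prob_measure p -> fs_bounded p.
Proof.
  intros [_ [Hub _]] A r [l [Hnd [_ ->]]]. apply Hub. exists l; repeat split; auto.
Qed.

Lemma prob_total {T} (p : T -> R) : is_prob_measure p -> mass p (fun _ => True) = 1.
Proof.
  intros Hp. pose proof (prob_bounded p Hp) as Hb. destruct Hp as [_ [Hub Hl]].
  apply Rle_antisym.
  - apply mass_le; [exact Hb|]. exact Hub.
  - apply Hl. intros r Hr. apply mass_ge; assumption.
Qed.

Definition pm {T} (p : T -> R) : T * T -> R := fun z => p (fst z) * p (snd z).

Lemma pair_bounded {T} (p : T -> R) : is_prob_measure p -> fs_bounded (pm p).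
Proof.
  intros Hp A r [l [Hnd [_ ->]]]. pose proof (prob_bounded p Hp) as Hb.
  destruct Hp as [Hnn _].
  set (X := nodup dec (map fst l)). set (Y := nodup dec (map snd l)).
  change (lsum (pm p) l <= 1).
  apply Rle_trans with (lsum (pm p) (list_prod X Y)).
  - apply lsum_incl; [intro; unfold pm; apply Rmult_le_pos; apply Hnn|exact Hnd|].
    intros [a b] Hab. apply in_prod; unfold X, Y; apply nodup_In.
    + change a with (fst (a, b)). apply in_map; exact Hab.
    + change b with (snd (a, b)). apply in_map; exact Hab.
  - unfold pm. rewrite lsum_prod.
    assert (HX : lsum p X <= 1) by (apply (Hb (fun _ => True)); exists X; repeat split; auto; apply NoDup_nodup).
    assert (HY : lsum p Y <= 1) by (apply (Hb (fun _ => True)); exists Y; repeat split; auto; apply NoDup_nodup).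
    assert (0 <= lsum p X) by (apply lsum_nonneg; exact Hnn).
    assert (0 <= lsum p Y) by (apply lsum_nonneg; exact Hnn).
    nra.
Qed.

Lemma mass_subadd {T B} (p : T -> R) (Q : T -> Prop) (l : list B) (P : B -> T -> Prop) :
  is_prob_measure p ->
  (forall y, Q y -> exists a, In a l /\ P a y) ->
  mass p Q <= lsum (fun a => mass p (P a)) l.
Proof.
  intros Hp Hcov. pose proof (prob_bounded p Hp) as Hb. destruct Hp as [Hnn _].
  apply Rle_plus_epsilon. intros e He.
  destruct (mass_approx p Q e Hb He) as [L [Hnd [HinQ Happ]]].
  assert (lsum p L <= lsum (fun a => mass p (P a)) l); [|lra].
  apply Rle_trans with (lsum (fun y => lsum (fun a => ind (P a) y * p y) l) L).
  - apply lsum_le. intros y Hy.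
    assert (E : lsum (fun a => ind (P a) y * p y) l = p y * sumf l (fun a => ind (P a)) y).
    { change (sumf l (fun a => ind (P a)) y) with (lsum (fun a => ind (P a) y) l).
      rewrite <- lsum_scal. apply fold_eq. intros; ring. }
    rewrite E. pose proof (sumf_ind_cover l P y (Hcov y (HinQ y Hy))).
    specialize (Hnn y). nra.
  - rewrite <- lsum_swap. apply lsum_le. intros a _.
    rewrite <- lsum_filter. apply mass_ge; [exact Hb|].
    exists (filter (bfilt (P a)) L). repeat split.
    + apply NoDup_filter; exact Hnd.
    + intros x Hx. apply filter_In in Hx as [_ Hx]. unfold bfilt in Hx.
      destruct (excluded_middle_informative (P a x)); [assumption|discriminate].
Qed.

Lemma lsum_map_pair {T} (p : T -> R) (x : T) (L : list T) :
  lsum (pm p) (map (fun y => (x, y)) L) = p x * lsum p L.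
Proof. induction L; unfold lsum, pm in *; simpl; [ring|]. rewrite IHL; ring. Qed.

Lemma pairs_exist (G : group) (p : G -> R) (b : R) (LG : list G) :
  (forall x, 0 <= p x) -> NoDup LG ->
  (forall x, In x LG -> exists Lx, NoDup Lx /\ (forall y, In y Lx -> commuting G x y) /\ b <= lsum p Lx) ->
  exists P, NoDup P /\ (forall z, In z P -> commuting G (fst z) (snd z)) /\
    (forall z, In z P -> In (fst z) LG) /\ lsum p LG * b <= lsum (pm p) P.
Proof.
  intros Hnn Hnd. induction Hnd as [|x t Hx Hnd IH]; intros HL.
  - exists nil. repeat split; try (intros z []). constructor. simpl. unfold lsum; simpl; lra.
  - destruct IH as [P' [HP'1 [HP'2 [HP'3 HP'4]]]]. { intros y Hy; apply HL; right; exact Hy. }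
    destruct (HL x (or_introl eq_refl)) as [Lx [HL1 [HL2 HL3]]].
    exists (map (fun y => (x, y)) Lx ++ P'). repeat split.
    + apply NoDup_app; [| exact HP'1 |].
      * apply NoDup_map_NoDup_ForallPairs; [|exact HL1]. intros a c _ _ E. injection E; auto.
      * intros z Hz Hz'. apply in_map_iff in Hz as [y [<- _]]. apply HP'3 in Hz'. simpl in Hz'. contradiction.
    + intros z Hz. apply in_app_or in Hz as [Hz|Hz].
      * apply in_map_iff in Hz as [y [<- Hy]]. simpl. apply HL2; exact Hy.
      * apply HP'2; exact Hz.
    + intros z Hz. apply in_app_or in Hz as [Hz|Hz].
      * apply in_map_iff in Hz as [y [<- Hy]]. left; reflexivity.
      * right. apply HP'3; exact Hz.
    + rewrite lsum_app, lsum_map_pair. change (lsum p (x :: t)) with (p x + lsum p t).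
      assert (p x * b <= p x * lsum p Lx) by (apply Rmult_le_compat_l; [apply Hnn|exact HL3]).
      lra.
Qed.

Lemma lcoset1 (G : group) (K : G -> Prop) y : lcoset G (gone G) K y <-> K y.
Proof.
  split.
  - intros [h [Hh ->]]. rewrite gmul1l. exact Hh.
  - intro Hy. exists y. split; [exact Hy|]. rewrite gmul1l; reflexivity.
Qed.

Lemma Rabs_lt_both (a b e : R) : Rabs (a - b) < e -> b - e < a /\ a < b + e.
Proof. intro H. apply Rabs_def2 in H. lra. Qed.

Lemma cG_lb (G : group) (Gam : G -> Prop) (m : nat) (M : nat -> G -> R) :
  is_subgroup G Gam -> is_index G Gam m ->
  (forall n, is_prob_measure (M n)) -> measures_index_uniformly G M ->
  1 / INR m <= inv_index G Gam.
Proof.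
  intros HGam Hidx HP HU.
  assert (HmR : 1 <= INR m) by (apply (le_INR 1); exact (index_pos G Gam m Hidx)).
  apply Rle_plus_epsilon. intros e He.
  destruct (HU e He) as [N HN].
  destruct Hidx as [l [Hlen [_ Hcov]]].
  assert (S : mass (M N) (fun _ => True) <= lsum (fun x => mass (M N) (lcoset G x Gam)) l).
  { apply mass_subadd; [apply HP|]. intros y _. apply Hcov. }
  rewrite prob_total in S by apply HP.
  assert (S2 : lsum (fun x => mass (M N) (lcoset G x Gam)) l <= lsum (fun _ => inv_index G Gam + e) l).
  { apply lsum_le. intros x _. destruct (Rabs_lt_both _ _ _ (HN N (Nat.le_refl N) x Gam HGam)). lra. }
  unfold lsum at 2 in S2. rewrite fold_const, Hlen in S2.
  apply (Rmult_le_reg_l (INR m)); [lra|].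
  replace (INR m * (1 / INR m)) with 1 by (field; lra). lra.
Qed.

Lemma Aset_mass_le (G : group) (p : G -> R) (x h : G) (c : R) :
  is_prob_measure p -> 0 <= c ->
  (forall y0, mass p (lcoset G y0 (commuting G x)) <= c) ->
  mass p (Aset G x h) <= c.
Proof.
  intros Hp Hc Hco. destruct (classic (exists y0, Aset G x h y0)) as [[y0 Hy0]|Hno].
  - rewrite (mass_ext p _ _ (Aset_coset G x h y0 Hy0)). apply Hco.
  - apply mass_le; [apply prob_bounded, Hp|]. intros r [l [_ [Hin ->]]].
    destruct l as [|y l]; [simpl; exact Hc|]. exfalso; apply Hno; exists y; apply Hin; left; reflexivity.
Qed.

Lemma cx_lb (G : group) (Gam H : G -> Prop) (m d : nat) (M : nat -> G -> R) (x : G) :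
  is_subgroup G Gam -> is_index G Gam m -> normal_in G H Gam -> has_card G H d ->
  quotient_abelian G Gam H ->
  (forall n, is_prob_measure (M n)) -> measures_index_uniformly G M -> Gam x ->
  1 / (INR m * INR d) <= inv_index G (commuting G x).
Proof.
  intros HGam Hidx Hn Hcard Hab HP HU Hx.
  assert (HmR : 1 <= INR m) by (apply (le_INR 1); exact (index_pos G Gam m Hidx)).
  assert (HdR : 1 <= INR d) by (apply (le_INR 1); apply (card_pos G H d); [apply Hn|exact Hcard]).
  assert (HcG := cG_lb G Gam m M HGam Hidx HP HU).
  set (cx := inv_index G (commuting G x)). set (cG := inv_index G Gam).
  apply Rle_plus_epsilon. intros e He.
  assert (He2 : 0 < e / 2) by lra.
  destruct (HU (e/2) He2) as [N HN]. set (p := M N).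
  assert (HC := fun y0 => Rabs_lt_both _ _ _ (HN N (Nat.le_refl N) y0 (commuting G x) (centralizer_subgroup G x))).
  assert (HG := Rabs_lt_both _ _ _ (HN N (Nat.le_refl N) (gone G) Gam HGam)).
  rewrite (mass_ext _ _ _ (lcoset1 G Gam)) in HG.
  assert (Hcx0 : 0 <= cx + e/2).
  { destruct (HC (gone G)). pose proof (mass_nonneg p (lcoset G (gone G) (commuting G x)) (prob_bounded p (HP N))).
    unfold p, cx in *. lra. }
  destruct Hcard as [lH [_ [Hlen Hin]]].
  assert (S : mass p Gam <= lsum (fun h => mass p (Aset G x h)) lH).
  { apply mass_subadd; [apply HP|]. intros y Hy.
    destruct (Aset_cover G Gam H x y Hn Hab Hx Hy) as [h [Hh HA]].
    exists h; split; [apply Hin; exact Hh|exact HA]. }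
  assert (S2 : lsum (fun h => mass p (Aset G x h)) lH <= lsum (fun _ => cx + e/2) lH).
  { apply lsum_le. intros h _. apply Aset_mass_le; [apply HP|exact Hcx0|].
    intro y0. destruct (HC y0). unfold p, cx. lra. }
  unfold lsum at 2 in S2. rewrite fold_const, Hlen in S2.
  destruct HG as [HG1 _]. change (mass (M N) Gam) with (mass p Gam) in HG1.
  assert (1 / INR m - e/2 <= INR d * (cx + e/2)) by lra.
  assert (E1 : 1 / (INR m * INR d) = (1 / INR m) / INR d) by (field; lra).
  rewrite E1. apply (Rmult_le_reg_l (INR d)); [lra|].
  replace (INR d * (1 / INR m / INR d)) with (1 / INR m) by (field; lra).
  assert (e/2 * INR d <= e * INR d - e/2) by nra. nra.
Qed.

Lemma Rbar_eps (c : R) (L : Rbar) : 0 < c ->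
  (forall e, 0 < e -> e <= c -> Rbar_le (c - e) L) -> Rbar_le c L.
Proof.
  intros Hc H. destruct L as [l| |]; simpl.
  - apply Rle_plus_epsilon. intros e He.
    assert (H' := H (Rmin e c) (Rmin_pos _ _ He Hc) (Rmin_r e c)). simpl in H'.
    pose proof (Rmin_l e c). lra.
  - exact I.
  - specialize (H c Hc (Rle_refl c)). simpl in H. exact H.
Qed.

Lemma seq_part (G : group) (Gam H : G -> Prop) (m d : nat) (M : nat -> G -> R) :
  is_subgroup G Gam -> is_index G Gam m -> normal_in G H Gam -> has_card G H d ->
  quotient_abelian G Gam H ->
  (forall n, is_prob_measure (M n)) -> measures_index_uniformly G M ->
  Rbar_le (Finite (1 / (INR m ^ 2 * INR d))) (dc_seq G M).
Proof.
  intros HGam Hidx Hn Hcard Hab HP HU.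
  assert (HmR : 1 <= INR m) by (apply (le_INR 1); exact (index_pos G Gam m Hidx)).
  assert (HdR : 1 <= INR d) by (apply (le_INR 1); apply (card_pos G H d); [apply Hn|exact Hcard]).
  assert (HcG := cG_lb G Gam m M HGam Hidx HP HU).
  assert (Hcx := fun x => cx_lb G Gam H m d M x HGam Hidx Hn Hcard Hab HP HU).
  set (a := 1 / INR m) in *. set (b0 := 1 / (INR m * INR d)) in *.
  assert (Ha : 0 < a) by (unfold a; apply Rdiv_lt_0_compat; lra).
  assert (Hb0 : 0 < b0) by (unfold b0; apply Rdiv_lt_0_compat; nra).
  assert (Ec : 1 / (INR m ^ 2 * INR d) = a * b0) by (unfold a, b0; field; lra).
  rewrite Ec. apply Rbar_eps; [nra|]. intros e He Hec.
  set (eps := e / (2 * (a + b0))).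
  assert (Heps : 0 < eps) by (unfold eps; apply Rdiv_lt_0_compat; lra).
  assert (Eeps : 2 * eps * (a + b0) = e) by (unfold eps; field; lra).
  assert (Hb1 : 2 * eps <= b0) by nra.
  apply Rbar_le_trans with (Finite ((a - 2 * eps) * (b0 - 2 * eps))).
  { simpl. nra. }
  destruct (HU eps Heps) as [N HN].
  unfold dc_seq. rewrite <- LimSup_seq_const. apply LimSup_le. exists N. intros n Hnn.
  set (p := M n). assert (Hb := prob_bounded p (HP n)).
  assert (Hnn0 : forall x, 0 <= p x) by apply (HP n).
  assert (HG := Rabs_lt_both _ _ _ (HN n Hnn (gone G) Gam HGam)).
  rewrite (mass_ext _ _ _ (lcoset1 G Gam)) in HG. fold p in HG.
  destruct (mass_approx p Gam eps Hb Heps) as [LG [HLG1 [HLG2 HLG3]]].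
  destruct (pairs_exist G p (b0 - 2 * eps) LG Hnn0 HLG1) as [P [HP1 [HP2 [_ HP4]]]].
  { intros x Hx. assert (Gx := HLG2 x Hx).
    assert (HC := Rabs_lt_both _ _ _ (HN n Hnn (gone G) (commuting G x) (centralizer_subgroup G x))).
    rewrite (mass_ext _ _ _ (lcoset1 G (commuting G x))) in HC. fold p in HC.
    destruct (mass_approx p (commuting G x) eps Hb Heps) as [Lx [Hx1 [Hx2 Hx3]]].
    exists Lx. repeat split; [exact Hx1|exact Hx2|]. specialize (Hcx x Gx). lra. }
  assert (Hdc : lsum (pm p) P <= dc_prob G p).
  { apply mass_ge; [apply pair_bounded, (HP n)|]. exists P. repeat split; auto. }
  assert (HL : a - 2 * eps <= lsum p LG) by lra.
  assert (0 <= b0 - 2 * eps) by lra.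
  assert ((a - 2 * eps) * (b0 - 2 * eps) <= lsum p LG * (b0 - 2 * eps)) by (apply Rmult_le_compat_r; lra).
  fold p. lra.
Qed.

Theorem proposition1p17 (G : group) (Gam H : G -> Prop) (m d : nat) :
  countable_group G ->
  is_subgroup G Gam -> is_index G Gam m ->
  normal_in G H Gam -> has_card G H d ->
  quotient_abelian G Gam H ->
  (forall mu : (G -> R) -> R, is_left_invariant_mean G mu ->
     dc_mean G mu >= 1 / (INR m ^ 2 * INR d)) /\
  (finitely_generated G ->
   forall M : nat -> G -> R,
     (forall n, is_prob_measure (M n)) ->
     measures_index_uniformly G M ->
     Rbar_le (Finite (1 / (INR m ^ 2 * INR d))) (dc_seq G M)).
Proof.
  intros _ HGam Hidx Hn Hcard Hab. split.
  - intros mu HM. apply (mean_part G Gam H m d mu); assumption.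
  - intros _ M HP HU. apply (seq_part G Gam H m d M); assumption.
Qed.
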